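(* Let $u$ be a unit vector of the form $\frac{1}{\sqrt5^{\,\ell}}\begin{bmatrix}\alpha\\\beta\end{bmatrix}$ with $\ell\in\mathbb N$ and $\alpha,\beta\in\mathbb Z[i]$, whose least denominator exponent is $(0,\ell)$. Then there exists a Pauli+$V$ circuit $W$ of $V$-count $\ell$ such that $Wu=e_1=\begin{bmatrix}1\\0\end{bmatrix}$.
   Context: The Pauli gates are $X=\begin{bmatrix}0&1\\1&0\end{bmatrix}$, $Y=\begin{bmatrix}0&-i\\i&0\end{bmatrix}$, $Z=\begin{bmatrix}1&0\\0&-1\end{bmatrix}$; the $V$-gates are $V_X=\frac{1}{\sqrt5}\begin{bmatrix}1&2i\\2i&1\end{bmatrix}$, $V_Y=\frac{1}{\sqrt5}\begin{bmatrix}1&2\\-2&1\end{bmatrix}$, $V_Z=\frac{1}{\sqrt5}\begin{bmatrix}1+2i&0\\0&1-2i\end{bmatrix}$ and their inverses. A Pauli+$V$ circuit is a finite product of Pauli gates and $V$-gates; its $V$-count is the number of $V$-gates occurring in it. For a vector $v\in\mathbb C^2$ that can be written as $\frac{1}{\sqrt2^{\,k}\sqrt5^{\,\ell}}\begin{bmatrix}\alpha\\\beta\end{bmatrix}$ with $k,\ell\in\mathbb N$, $0\le k\le2$, $\alpha,\beta\in\mathbb Z[i]$, its least denominator exponent is the pair $(k_0,\ell_0)$ where $k_0$ (resp. $\ell_0$) is the least $k$ (resp. least $\ell$) for which such a representation exists. *)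

(* Defs.v *)
From mathcomp Require Import all_boot all_order all_algebra all_field.
Set Implicit Arguments. Unset Strict Implicit. Unset Printing Implicit Defensive.
Import Order.TTheory GRing.Theory Num.Theory.
Local Open Scope ring_scope.

Definition gaussian (z : algC) : Prop :=
  exists a b : int, z = a%:~R + b%:~R * 'i.

Definition cvec2 (x y : algC) : 'cV[algC]_2 :=
  \col_(i < 2) (if i == 0 :> nat then x else y).

Definition mx2 (a b c d : algC) : 'M[algC]_2 :=
  \matrix_(i < 2, j < 2)
    (if i == 0 :> nat then (if j == 0 :> nat then a else b)
     else (if j == 0 :> nat then c else d)).

Definition e1 : 'cV[algC]_2 := cvec2 1 0.

Definition sqrt5 : algC := sqrtC 5.
Definition sqrt2 : algC := sqrtC 2.

Definition PauliX : 'M[algC]_2 := mx2 0 1 1 0.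
Definition PauliY : 'M[algC]_2 := mx2 0 (- 'i) 'i 0.
Definition PauliZ : 'M[algC]_2 := mx2 1 0 0 (-1).
Definition VXm : 'M[algC]_2 := sqrt5^-1 *: mx2 1 (2 * 'i) (2 * 'i) 1.
Definition VYm : 'M[algC]_2 := sqrt5^-1 *: mx2 1 2 (-2) 1.
Definition VZm : 'M[algC]_2 := sqrt5^-1 *: mx2 (1 + 2 * 'i) 0 0 (1 - 2 * 'i).

Inductive gate : Type :=
  | GX | GY | GZ | GVX | GVY | GVZ | GVXinv | GVYinv | GVZinv.

Definition gate_mx (g : gate) : 'M[algC]_2 :=
  match g with
  | GX => PauliX | GY => PauliY | GZ => PauliZ
  | GVX => VXm | GVY => VYm | GVZ => VZm
  | GVXinv => invmx VXm | GVYinv => invmx VYm | GVZinv => invmx VZm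
  end.

Definition is_Vgate (g : gate) : bool :=
  match g with GX | GY | GZ => false | _ => true end.

(* A Pauli+V circuit is a finite sequence of gates; its matrix is the product
   (the list [g1; ...; gn] denotes g1 * ... * gn). *)
Definition circuit_mx (W : seq gate) : 'M[algC]_2 :=
  foldr (fun g M => gate_mx g *m M) 1%:M W.

Definition Vcount (W : seq gate) : nat := count is_Vgate W.

Definition representable (v : 'cV[algC]_2) (k l : nat) : Prop :=
  (k <= 2)%N /\
  exists alpha beta : algC, gaussian alpha /\ gaussian beta /\
    v = (sqrt2 ^+ k * sqrt5 ^+ l)^-1 *: cvec2 alpha beta.

Definition lde (v : 'cV[algC]_2) (k0 l0 : nat) : Prop :=
  (exists l, representable v k0 l) /\
  (forall k l, representable v k l -> (k0 <= k)%N) /\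
  (exists k, representable v k l0) /\
  (forall k l, representable v k l -> (l0 <= l)%N).

Definition unit_vector (v : 'cV[algC]_2) : Prop :=
  `|v 0 0| ^+ 2 + `|v 1 0| ^+ 2 = 1.

(* Main.v *)
Require Import Defs.
From mathcomp Require Import all_boot all_order all_algebra all_field.
From mathcomp Require Import zify ring lra.
Import GRing.Theory Num.Theory.
Local Open Scope ring_scope.



Lemma mx2_cvec a b c d x y : mx2 a b c d *m cvec2 x y = cvec2 (a*x+b*y) (c*x+d*y).
Proof.
apply/matrixP => i j; rewrite !mxE !big_ord_recr big_ord0 /= add0r !mxE /=.
by case: i => [[|[|//]]] ?.
Qed.

Lemma scale_cvec k x y : k *: cvec2 x y = cvec2 (k*x) (k*y).
Proof. by apply/matrixP => i j; rewrite !mxE; case: ifP. Qed.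

Lemma cvec2_eq x y x' y' : x = x' -> y = y' -> cvec2 x y = cvec2 x' y'.
Proof. by move=> -> ->. Qed.

Lemma circ_cons g W (v : 'cV[algC]_2) : circuit_mx (g :: W) *m v = gate_mx g *m (circuit_mx W *m v).
Proof. by rewrite /= mulmxA. Qed.

Lemma circ_nil (v : 'cV[algC]_2) : circuit_mx [::] *m v = v.
Proof. by rewrite /= mul1mx. Qed.

Lemma circ_cat W1 W2 (v : 'cV[algC]_2) : circuit_mx (W1 ++ W2) *m v = circuit_mx W1 *m (circuit_mx W2 *m v).
Proof.
elim: W1 v => [|g W IH] v; first by rewrite circ_nil.
by rewrite cat_cons !circ_cons IH.
Qed.

Lemma Vcount_cat W1 W2 : Vcount (W1 ++ W2) = (Vcount W1 + Vcount W2)%N.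
Proof. by rewrite /Vcount count_cat. Qed.

Lemma hi : ('i : algC) ^+ 2 = -1. Proof. exact: sqrCi. Qed.
Lemma s5 : sqrt5 ^+ 2 = 5. Proof. by rewrite /sqrt5 sqrtCK. Qed.
Lemma s5n0 : sqrt5 != 0.
Proof. by rewrite /sqrt5 sqrtC_eq0 pnatr_eq0. Qed.

Definition gi (a b : int) : algC := a%:~R + b%:~R * 'i.

Ltac circ := rewrite ?circ_cons ?circ_nil /gate_mx /PauliX /PauliY /PauliZ /VXm /VYm /VZm;
  repeat (rewrite ?mx2_cvec ?scale_cvec -?scalemxAl ?scalemxAr).

Lemma div5 (p q p' q' : int) : p = p' * 5 -> q = q' * 5 ->
  sqrt5^-1 * (p%:~R + q%:~R * 'i) = sqrt5 * gi p' q'.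
Proof.
move=> -> ->; rewrite /gi !intrM.
have h := s5; have hn := s5n0.
field: h => //.
Qed.

Lemma gateX a b c d : circuit_mx [:: GVX] *m cvec2 (gi a b) (gi c d) =
  sqrt5^-1 *: cvec2 ((a - 2*d)%:~R + (b + 2*c)%:~R * 'i) ((c - 2*b)%:~R + (d + 2*a)%:~R * 'i).
Proof.
circ; apply: cvec2_eq;
rewrite /gi !(intrD, intrM, intrN); have h := hi; ring: h.
Qed.

Lemma gateXi a b c d : circuit_mx [:: GZ; GVX; GZ] *m cvec2 (gi a b) (gi c d) =
  sqrt5^-1 *: cvec2 ((a + 2*d)%:~R + (b - 2*c)%:~R * 'i) ((c + 2*b)%:~R + (d - 2*a)%:~R * 'i).
Proof.
circ; apply: cvec2_eq;
rewrite /gi !(intrD, intrM, intrN); have h := hi; ring: h.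
Qed.

Lemma gateY a b c d : circuit_mx [:: GVY] *m cvec2 (gi a b) (gi c d) =
  sqrt5^-1 *: cvec2 ((a + 2*c)%:~R + (b + 2*d)%:~R * 'i) ((c - 2*a)%:~R + (d - 2*b)%:~R * 'i).
Proof.
circ; apply: cvec2_eq;
rewrite /gi !(intrD, intrM, intrN); have h := hi; ring: h.
Qed.

Lemma gateYi a b c d : circuit_mx [:: GZ; GVY; GZ] *m cvec2 (gi a b) (gi c d) =
  sqrt5^-1 *: cvec2 ((a - 2*c)%:~R + (b - 2*d)%:~R * 'i) ((c + 2*a)%:~R + (d + 2*b)%:~R * 'i).
Proof.
circ; apply: cvec2_eq;
rewrite /gi !(intrD, intrM, intrN); have h := hi; ring: h.
Qed.

Lemma gateZ a b c d : circuit_mx [:: GVZ] *m cvec2 (gi a b) (gi c d) =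
  sqrt5^-1 *: cvec2 ((a - 2*b)%:~R + (b + 2*a)%:~R * 'i) ((c + 2*d)%:~R + (d - 2*c)%:~R * 'i).
Proof.
circ; apply: cvec2_eq;
rewrite /gi !(intrD, intrM, intrN); have h := hi; ring: h.
Qed.

Lemma gateZi a b c d : circuit_mx [:: GX; GVZ; GX] *m cvec2 (gi a b) (gi c d) =
  sqrt5^-1 *: cvec2 ((a + 2*b)%:~R + (b - 2*a)%:~R * 'i) ((c - 2*d)%:~R + (d + 2*c)%:~R * 'i).
Proof.
circ; apply: cvec2_eq;
rewrite /gi !(intrD, intrM, intrN); have h := hi; ring: h.
Qed.

Definition z5 (x : nat) := (x %% 5 == 0)%N.
Definition chk (a b c d : nat) : bool :=
  [|| ~~ z5 (a*a+b*b+c*c+d*d),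
      [&& z5 a, z5 b, z5 c & z5 d],
      [&& z5 (a+3*d), z5 (b+2*c), z5 (c+3*b) & z5 (d+2*a)],
      [&& z5 (a+2*d), z5 (b+3*c), z5 (c+2*b) & z5 (d+3*a)],
      [&& z5 (a+2*c), z5 (b+2*d), z5 (c+3*a) & z5 (d+3*b)],
      [&& z5 (a+3*c), z5 (b+3*d), z5 (c+2*a) & z5 (d+2*b)],
      [&& z5 (a+3*b), z5 (b+2*a), z5 (c+2*d) & z5 (d+3*c)] |
      [&& z5 (a+2*b), z5 (b+3*a), z5 (c+3*d) & z5 (d+2*c)] ]%N.

Lemma chk_all : [forall a : 'I_5, forall b : 'I_5, forall c : 'I_5, forall d : 'I_5, chk a b c d].
Proof. apply/forallP => a; apply/forallP => b; apply/forallP => c; apply/forallP => d. by case: a b c d => [[|[|[|[|[|?]]]]] ?] [[|[|[|[|[|?]]]]] ?] [[|[|[|[|[|?]]]]] ?] [[|[|[|[|[|?]]]]] ?]. Qed.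

Lemma dispatch (a b c d : int) : (5 %| a^+2+b^+2+c^+2+d^+2)%Z ->
  [/\ (5 %| a)%Z, (5 %| b)%Z, (5 %| c)%Z & (5 %| d)%Z] \/
  [/\ (5 %| a-2*d)%Z, (5 %| b+2*c)%Z, (5 %| c-2*b)%Z & (5 %| d+2*a)%Z] \/
  [/\ (5 %| a+2*d)%Z, (5 %| b-2*c)%Z, (5 %| c+2*b)%Z & (5 %| d-2*a)%Z] \/
  [/\ (5 %| a+2*c)%Z, (5 %| b+2*d)%Z, (5 %| c-2*a)%Z & (5 %| d-2*b)%Z] \/
  [/\ (5 %| a-2*c)%Z, (5 %| b-2*d)%Z, (5 %| c+2*a)%Z & (5 %| d+2*b)%Z] \/
  [/\ (5 %| a-2*b)%Z, (5 %| b+2*a)%Z, (5 %| c+2*d)%Z & (5 %| d-2*c)%Z] \/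
  [/\ (5 %| a+2*b)%Z, (5 %| b-2*a)%Z, (5 %| c-2*d)%Z & (5 %| d+2*c)%Z].
Proof.
move=> H.
have [na Ha] : exists na : nat, (na < 5)%N /\ (5 %| a - na%:Z)%Z.
  exists `|(a %% 5)%Z|%N; lia.
have [nb Hb] : exists n : nat, (n < 5)%N /\ (5 %| b - n%:Z)%Z.
  exists `|(b %% 5)%Z|%N; lia.
have [nc Hc] : exists n : nat, (n < 5)%N /\ (5 %| c - n%:Z)%Z.
  exists `|(c %% 5)%Z|%N; lia.
have [nd Hd] : exists n : nat, (n < 5)%N /\ (5 %| d - n%:Z)%Z.
  exists `|(d %% 5)%Z|%N; lia.
case: Ha Hb Hc Hd => la Ha [lb Hb] [lc Hc] [ld Hd].
have := forallP chk_all (Ordinal la).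
move=> /forallP /(_ (Ordinal lb)) /forallP /(_ (Ordinal lc)) /forallP /(_ (Ordinal ld)).
rewrite /chk /z5 /=.
have e2 : forall (x : int) (n : nat), (5 %| x - n%:Z)%Z -> (5 %| x^+2 - (n%:Z)^+2)%Z.
  move=> x n hx; rewrite (_ : x^+2 - _ = (x - n%:Z) * (x + n%:Z)); last by ring.
  exact: dvdz_mulr.
case/orP => [h|].
  exfalso; move/negP: h; apply.
  have := rpredB H (rpredD (rpredD (rpredD (e2 _ _ Ha) (e2 _ _ Hb)) (e2 _ _ Hc)) (e2 _ _ Hd)).
  rewrite (_ : _ - _ = ((na*na+nb*nb+nc*nc+nd*nd)%N)%:Z); first by [].
  rewrite !PoszD !PoszM; ring.
clear H e2.
case/orP => [/and4P[h1 h2 h3 h4]|]; first by left; split; lia.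
case/orP => [/and4P[h1 h2 h3 h4]|]; first by right; left; split; lia.
case/orP => [/and4P[h1 h2 h3 h4]|]; first by do 2 right; left; split; lia.
case/orP => [/and4P[h1 h2 h3 h4]|]; first by do 3 right; left; split; lia.
case/orP => [/and4P[h1 h2 h3 h4]|]; first by do 4 right; left; split; lia.
case/orP => [/and4P[h1 h2 h3 h4]|]; first by do 5 right; left; split; lia.
case/and4P=> h1 h2 h3 h4; by do 6 right; split; lia.
Qed.

Lemma step C (a b c d p1 p2 p3 p4 a' b' c' d' : int) :
  circuit_mx C *m cvec2 (gi a b) (gi c d) =
    sqrt5^-1 *: cvec2 (p1%:~R + p2%:~R * 'i) (p3%:~R + p4%:~R * 'i) ->
  p1 = a' * 5 -> p2 = b' * 5 -> p3 = c' * 5 -> p4 = d' * 5 ->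
  circuit_mx C *m cvec2 (gi a b) (gi c d) = sqrt5 *: cvec2 (gi a' b') (gi c' d').
Proof.
move=> -> e1 e2 e3 e4; rewrite !scale_cvec.
by rewrite (div5 _ _ _ _ e1 e2) (div5 _ _ _ _ e3 e4).
Qed.

Lemma padC (x y : algC) : circuit_mx [:: GVX; GZ; GVX; GZ] *m cvec2 x y = cvec2 x y.
Proof.
circ; apply: cvec2_eq; have h := hi; have h5 := s5; have hn := s5n0; field: h h5 => //.
Qed.



Definition Pw := [:: GX; GY; GZ].

Lemma base (a b c d : int) : a^+2+b^+2+c^+2+d^+2 = 1 ->
  exists W, Vcount W = 0%N /\ circuit_mx W *m cvec2 (gi a b) (gi c d) = sqrt5^+0 *: e1.
Proof.
move=> H.
have sq : forall x : int, 0 <= x^+2 by move=> x; exact: sqr_ge0.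
have ha : a^+2 <= 1 by move: (sq b) (sq c) (sq d); lia.
have hb : b^+2 <= 1 by move: (sq a) (sq c) (sq d); lia.
have hc : c^+2 <= 1 by move: (sq b) (sq a) (sq d); lia.
have hd : d^+2 <= 1 by move: (sq b) (sq c) (sq a); lia.
have cs : forall x : int, x^+2 <= 1 -> x = 0 \/ x = 1 \/ x = -1 by move=> x; nia.
have hsol : forall W (x y : int), Vcount W = 0%N ->
   circuit_mx W *m cvec2 (gi x 0) (gi 0 y) = cvec2 1 0 ->
   exists W, Vcount W = 0%N /\ circuit_mx W *m cvec2 (gi x 0) (gi 0 y) = sqrt5^+0 *: e1.
  by move=> W x y h1 h2; exists W; rewrite expr0 scale1r.
have hsol2 : forall W (x y : int), Vcount W = 0%N ->
   circuit_mx W *m cvec2 (gi 0 x) (gi y 0) = cvec2 1 0 ->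
   exists W, Vcount W = 0%N /\ circuit_mx W *m cvec2 (gi 0 x) (gi y 0) = sqrt5^+0 *: e1.
  by move=> W x y h1 h2; exists W; rewrite expr0 scale1r.
have h := hi.
case: (cs a ha) => [a0|[a1|a1]].
2,3: have [b0 [c0 d0]] : b = 0 /\ c = 0 /\ d = 0 by subst; move: (sq b) (sq c) (sq d); nia.
2: subst; apply: (hsol [::]) => //; circ; apply: cvec2_eq; rewrite /gi; ring: h.
2: subst; apply: (hsol (Pw ++ Pw)) => //; rewrite /Pw ?circ_cat; circ; apply: cvec2_eq; rewrite /gi; ring: h.
subst a.
case: (cs b hb) => [b0|[b1|b1]].
2,3: have [c0 d0] : c = 0 /\ d = 0 by subst; move: (sq c) (sq d); nia.
2: subst; apply: (hsol2 (Pw ++ Pw ++ Pw)) => //; rewrite /Pw ?circ_cat; circ; apply: cvec2_eq; rewrite /gi; ring: h.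
2: subst; apply: (hsol2 Pw) => //; rewrite /Pw ?circ_cat; circ; apply: cvec2_eq; rewrite /gi; ring: h.
subst b.
case: (cs c hc) => [c0|[c1|c1]].
2,3: have d0 : d = 0 by subst; move: (sq d); nia.
2: subst; apply: (hsol2 [:: GX]) => //; rewrite /Pw ?circ_cat; circ; apply: cvec2_eq; rewrite /gi; ring: h.
2: subst; apply: (hsol2 (Pw ++ Pw ++ [:: GX])) => //; rewrite /Pw ?circ_cat; circ; apply: cvec2_eq; rewrite /gi; ring: h.
subst c.
case: (cs d hd) => [d0|[d1|d1]].
- by subst; move: H; rewrite /=; lia.
- subst; apply: (hsol (Pw ++ Pw ++ Pw ++ [:: GX])) => //; rewrite /Pw ?circ_cat; circ; apply: cvec2_eq; rewrite /gi; ring: h.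
- subst; apply: (hsol (Pw ++ [:: GX])) => //; rewrite /Pw ?circ_cat; circ; apply: cvec2_eq; rewrite /gi; ring: h.
Qed.



Lemma normred (a b c d p1 p2 p3 p4 a' b' c' d' : int) (l : nat) :
  a^+2+b^+2+c^+2+d^+2 = 5^+l.+1 ->
  p1^+2+p2^+2+p3^+2+p4^+2 = 5 * (a^+2+b^+2+c^+2+d^+2) ->
  p1 = a' * 5 -> p2 = b' * 5 -> p3 = c' * 5 -> p4 = d' * 5 ->
  a'^+2+b'^+2+c'^+2+d'^+2 = 5^+l.
Proof.
move=> H E e1 e2 e3 e4; apply: (mulfI (x := 25)) => //.
rewrite -[RHS](_ : 5 * 5^+l.+1 = _); last by rewrite exprS; ring.
by rewrite -H -E e1 e2 e3 e4; ring.
Qed.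

Arguments normred {a b c d p1 p2 p3 p4 a' b' c' d' l}.
Arguments step {C a b c d p1 p2 p3 p4 a' b' c' d'}.

Lemma main l : forall a b c d : int, a^+2+b^+2+c^+2+d^+2 = 5^+l ->
  exists W, Vcount W = l /\ circuit_mx W *m cvec2 (gi a b) (gi c d) = sqrt5^+l *: e1.
Proof.
elim/ltn_ind: l => -[|l] IH a b c d H; first exact: base.
have H5 : (5 %| a^+2+b^+2+c^+2+d^+2)%Z by rewrite H exprS dvdz_mulr.
have fin : forall C p1 p2 p3 p4, Vcount C = 1%N ->
  circuit_mx C *m cvec2 (gi a b) (gi c d) =
    sqrt5^-1 *: cvec2 (p1%:~R + p2%:~R * 'i) (p3%:~R + p4%:~R * 'i) ->
  p1^+2+p2^+2+p3^+2+p4^+2 = 5 * (a^+2+b^+2+c^+2+d^+2) ->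
  (5 %| p1)%Z -> (5 %| p2)%Z -> (5 %| p3)%Z -> (5 %| p4)%Z ->
  exists W, Vcount W = l.+1 /\ circuit_mx W *m cvec2 (gi a b) (gi c d) = sqrt5^+l.+1 *: e1.
  move=> C p1 p2 p3 p4 hC hG E /dvdzP[a' e1] /dvdzP[b' e2] /dvdzP[c' e3] /dvdzP[d' e4].
  have [W' [hW' hW'2]] := IH l (ltnSn l) a' b' c' d' (normred H E e1 e2 e3 e4).
  exists (W' ++ C); rewrite Vcount_cat hW' hC addn1; split => //.
  rewrite circ_cat (step hG e1 e2 e3 e4) -scalemxAr hW'2 scalerA -exprS //.
case: (dispatch _ _ _ _ H5) => [[d1 d2 d3 d4]|[[d1 d2 d3 d4]|[[d1 d2 d3 d4]|[[d1 d2 d3 d4]|[[d1 d2 d3 d4]|[[d1 d2 d3 d4]|[d1 d2 d3 d4]]]]]]].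
- move: d1 d2 d3 d4 => /dvdzP[a2 q1] /dvdzP[b2 q2] /dvdzP[c2 q3] /dvdzP[d2 q4].
  clear fin H5; case: l IH H => [|l] IH H.
    exfalso; move: H; rewrite q1 q2 q3 q4.
    rewrite (_ : _ + _ = 25 * (a2^+2+b2^+2+c2^+2+d2^+2)); last by ring.
    move: (a2^+2+b2^+2+c2^+2+d2^+2) => z; rewrite expr1; lia.
  have hn : a2^+2+b2^+2+c2^+2+d2^+2 = 5^+l.
    apply: (mulfI (x := 25)) => //; rewrite (_ : 25 * 5^+l = 5^+l.+2); last by rewrite !exprS; ring.
    by rewrite -H q1 q2 q3 q4; ring.
  have [W' [hW' hW'2]] := IH l (ltnW (ltnSn l.+1)) a2 b2 c2 d2 hn.
  exists (W' ++ [:: GVX; GZ; GVX; GZ]); rewrite Vcount_cat hW' addn2; split => //.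
  rewrite circ_cat padC.
  have -> : cvec2 (gi a b) (gi c d) = 5 *: cvec2 (gi a2 b2) (gi c2 d2).
    rewrite scale_cvec q1 q2 q3 q4 /gi; apply: cvec2_eq; rewrite !intrM; ring.
  rewrite -scalemxAr hW'2 scalerA -s5 -exprD addnC addn2 //.
- by apply: (fin _ _ _ _ _ _ (gateX a b c d)) => //; ring.
- by apply: (fin _ _ _ _ _ _ (gateXi a b c d)) => //; ring.
- by apply: (fin _ _ _ _ _ _ (gateY a b c d)) => //; ring.
- by apply: (fin _ _ _ _ _ _ (gateYi a b c d)) => //; ring.
- by apply: (fin _ _ _ _ _ _ (gateZ a b c d)) => //; ring.
- by apply: (fin _ _ _ _ _ _ (gateZi a b c d)) => //; ring.
Qed.



Lemma normgi (a b : int) : `|gi a b| ^+ 2 = (a^+2 + b^+2)%:~R.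
Proof.
rewrite normCK /gi (mulrC b%:~R 'i) conjC_rect ?realz //.
have h := hi; rewrite !(intrD, intrM, rmorphXn); ring: h.
Qed.

Lemma normscal (l : nat) (x : algC) : `|(sqrt5 ^+ l)^-1 * x| ^+ 2 = (5 ^+ l)^-1 * `|x| ^+ 2.
Proof.
rewrite normrM normrV ?unitfE ?expf_neq0 ?s5n0 // normrX ger0_norm ?sqrtC_ge0 //.
by rewrite exprMn exprVn -exprM mulnC exprM s5.
Qed.

Theorem lemma6p10 (l : nat) (alpha beta : algC) (u : 'cV[algC]_2) :
  gaussian alpha -> gaussian beta ->
  u = (sqrt5 ^+ l)^-1 *: cvec2 alpha beta ->
  unit_vector u ->
  lde u 0 l ->
  exists W : seq gate, Vcount W = l /\ circuit_mx W *m u = e1.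
Proof.
move=> [a [b ->]] [c [d ->]] -> hu _.
have N : a^+2+b^+2+c^+2+d^+2 = 5^+l.
  move: hu; rewrite /unit_vector !mxE /= -/(gi a b) -/(gi c d) !normscal !normgi.
  rewrite -mulrDr => h.
  have h5 : (5 : algC) ^+ l != 0 by rewrite expf_neq0 // pnatr_eq0.
  have e : ((a^+2+b^+2)%:~R + (c^+2+d^+2)%:~R : algC) = 5^+l.
    by apply: (mulfI (invr_neq0 h5)); rewrite h mulVf.
  have e5 : (5 : algC)^+l = ((5:int)^+l)%:~R by rewrite rmorphXn.
  by move: e; rewrite e5 -intrD => /intr_inj; rewrite !addrA.
have [W [hW1 hW2]] := main l a b c d N.
exists W; split => //.
rewrite -scalemxAr -/(gi a b) -/(gi c d) hW2 scalerA mulVf ?scale1r //.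
by rewrite expf_neq0 // s5n0.
Qed.
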